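(* Suppose the noisy label $\tilde Y$ does not have the same distribution as the clean label $Y$. Then there exists a score function $s$ such that $$\mathbb P\big(Y_{\rm test}\in\widehat{\mathcal C}_{\rm noisy}(X_{\rm test})\big)<\mathbb P\big(Y_{\rm test}\in\widehat{\mathcal C}(X_{\rm test})\big).$$ Here $\widehat{\mathcal C}_{\rm noisy}$ is built from the noisy calibration samples and $\widehat{\mathcal C}$ from the clean calibration samples, both with the same score $s$ and level $\alpha$.
   Context: Let $(X_i,Y_i)$, $i=1,\dots,n$, and $(X_{\rm test},Y_{\rm test})$ be i.i.d. Noisy labels $\tilde Y_i=g(Y_i,U_i)$ are produced by a random corruption function $g$ with independent seeds $U_i\sim\mathrm{Unif}[0,1]$. For a score $s:\mathcal X\times\mathcal Y\to\mathbb R$ and level $\alpha\in(0,1)$: - $\hat q_{\rm clean}$ is the $\lceil(n+1)(1-\alpha)\rceil$-th smallest of $s(X_i,Y_i)$, and $\widehat{\mathcal C}(x)=\{y:s(x,y)\le\hat q_{\rm clean}\}$. - $\hat q_{\rm noisy}$ is the $\lceil(n+1)(1-\alpha)\rceil$-th smallest of $s(X_i,\tilde Y_i)$, and $\widehat{\mathcal C}_{\rm noisy}(x)=\{y:s(x,y)\le\hat q_{\rm noisy}\}$. *)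

(* Defs.v *)
From HB Require Import structures.
From mathcomp Require Import all_boot all_order all_algebra.
From mathcomp Require Import all_classical all_reals all_analysis.
Set Implicit Arguments. Unset Strict Implicit. Unset Printing Implicit Defensive.
Import Order.TTheory GRing.Theory Num.Theory.
Local Open Scope classical_set_scope.
Local Open Scope ring_scope.

Definition preimage_family d d' (T : measurableType d) (V : measurableType d')
  (f : T -> V) : set (set T) :=
  [set E | exists B : set V, measurable B /\ E = f @^-1` B].

Definition mutually_independent d (T : measurableType d) (R : realType)
  (P : probability T R) (I : finType) (F : I -> set (set T)) : Prop :=
  forall A : I -> set T, (forall i, F i (A i)) ->
  forall J : {set I},
    P (\big[setI/setT]_(i in J) A i) = (\prod_(i in J) fine (P (A i)))%:E.

(* k-th smallest element (1-based) of a finite list of reals; +oo if it does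
   not exist (k = 0 or k > size) *)
Definition kth_smallest (R : realType) (k : nat) (v : seq R) : \bar R :=
  if (0 < k <= size v)%N then (nth 0 (sort <=%R v) k.-1)%:E else +oo%E.

Definition conf_rank (R : realType) (n : nat) (alpha : R) : int :=
  Num.ceil (n.+1%:R * (1 - alpha)).

Definition conf_quantile (R : realType) (n : nat) (alpha : R)
  (scores : 'I_n -> R) : \bar R :=
  kth_smallest `|conf_rank n alpha|%N [seq scores i | i <- enum 'I_n].

Definition conf_set (TX TY : Type) (R : realType) (s : TX -> TY -> R)
  (q : \bar R) (x : TX) : set TY := [set y | ((s x y)%:E <= q)%E].

(* Main.v *)
Require Import Defs.
From HB Require Import structures.
From mathcomp Require Import all_boot all_order all_algebra.
From mathcomp Require Import all_classical all_reals all_analysis.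
From mathcomp Require Import measurable_realfun.
From mathcomp Require Import ring lra zify.
Import Order.TTheory GRing.Theory Num.Theory.
Local Open Scope classical_set_scope.
Local Open Scope ring_scope.

Section Binom.
Variable R : realType.
Implicit Types x y : R.

Definition bb (n j : nat) x : R := 'C(n, j)%:R * x ^+ j * (1 - x) ^+ (n - j).
Definition BB (n k : nat) x : R := \sum_(k <= j < n.+1) bb n j x.

Lemma bb_rec n j x : bb n.+1 j.+1 x = x * bb n j x + (1 - x) * bb n j.+1 x.
Proof.
rewrite /bb binS natrD subSS.
case: (ltnP j n) => hj.
  have -> : (n - j = (n - j.+1).+1)%N by rewrite subnS prednK // subn_gt0.
  rewrite !exprS; ring.
rewrite bin_small ?ltnS // mul0r mul0r mulr0 !addr0 exprS; ring.
Qed.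

Lemma BB_ext n k N x : (n.+1 <= N)%N -> \sum_(k <= j < N) bb n j x = BB n k x.
Proof.
move=> hN; rewrite /BB.
case: (leqP k n.+1) => hk.
  rewrite (@big_cat_nat _ _ _ n.+1 k N) //= [X in _ + X]big1_seq ?addr0 //.
  move=> j /andP[_]; rewrite mem_index_iota => /andP[hj _].
  by rewrite /bb bin_small // !mul0r.
rewrite [RHS]big_geq ?(ltnW hk) // big1_seq // => j /andP[_].
rewrite mem_index_iota => /andP[hj _].
rewrite /bb bin_small; first by rewrite !mul0r.
by apply: leq_trans hj; apply: ltnW.
Qed.

Lemma BB_rec n k x : BB n.+1 k.+1 x = x * BB n k x + (1 - x) * BB n k.+1 x.
Proof.
rewrite /BB -(addn1 k) big_addn subn1 /=.
under eq_bigr => j _ do rewrite addn1 bb_rec.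
rewrite big_split /= -!mulr_sumr; congr (_ + _ * _).
idtac.
rewrite addn1 -/(BB n k.+1 x) -(@BB_ext n k.+1 n.+2 x) // -(addn1 k) big_addn subn1 /=.
by apply: eq_bigr => j _; rewrite addn1.
Qed.

Lemma BB_split n k x : (k <= n)%N -> BB n k x = bb n k x + BB n k.+1 x.
Proof. by move=> hk; rewrite /BB big_ltn. Qed.

Lemma BB_big n k x : (n < k)%N -> BB n k x = 0.
Proof. by move=> hk; rewrite /BB big_geq. Qed.

Lemma BB0 n x : BB n 0 x = 1.
Proof.
elim: n => [|n IH]; first by rewrite /BB big_nat1 /bb bin0 !expr0 !mulr1.
rewrite BB_split // BB_rec.
have -> : bb n.+1 0 x = (1 - x) * bb n 0 x.
  by rewrite /bb !bin0 !subn0 exprS; ring.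
rewrite IH; have := BB_split _ _ x (leq0n n); rewrite IH => hs.
transitivity (x + (1 - x) * (bb n 0 x + BB n 1 x)); first ring.
by rewrite -hs; ring.
Qed.

Lemma bb_ge0 n j x : 0 <= x <= 1 -> 0 <= bb n j x.
Proof.
move=> /andP[h0 h1]; rewrite /bb !mulr_ge0 ?exprn_ge0 ?subr_ge0 //.
Qed.

Lemma BB_ge0 n k x : 0 <= x <= 1 -> 0 <= BB n k x.
Proof. by move=> hx; rewrite /BB sumr_ge0 // => j _; exact: bb_ge0. Qed.

Lemma BB_anti n k x : 0 <= x <= 1 -> BB n k.+1 x <= BB n k x.
Proof.
move=> hx; case: (leqP k n) => hk.
  by rewrite (BB_split _ _ x hk) lerDr bb_ge0.
by rewrite !BB_big // ltnW.
Qed.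

Lemma BB_mono n k x y : 0 <= x -> x <= y -> y <= 1 -> BB n k x <= BB n k y.
Proof.
move=> h0 hxy h1.
have hx : 0 <= x <= 1 by apply/andP; split => //; exact: le_trans hxy h1.
have hy : 0 <= y <= 1 by apply/andP; split => //; exact: le_trans hxy.
elim: n k => [|n IH] [|k]; rewrite ?BB0 //.
  by rewrite !BB_big.
rewrite !BB_rec.
have d1 := IH k; have d2 := IH k.+1; have e := BB_anti n k x hx.
have e0 := BB_ge0 n k.+1 x hx.
nra.
Qed.

Lemma BB_strict n k x y : (0 < k <= n)%N -> 0 <= x -> x < y -> y <= 1 ->
  BB n k x < BB n k y.
Proof.
move=> hk h0 hxy h1.
have hx : 0 <= x <= 1 by apply/andP; split => //; exact: le_trans (ltW hxy) h1.
have hy : 0 <= y <= 1 by apply/andP; split => //; exact: le_trans (ltW hxy).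
elim: n k hk => [|n IH] [|k] //= hk.
rewrite !BB_rec.
have d2 := BB_mono n k.+1 x y h0 (ltW hxy) h1.
have d1 := BB_mono n k x y h0 (ltW hxy) h1.
have e := BB_anti n k x hx.
case: k hk d1 d2 e => [|k] hk d1 d2 e.
  have := BB_split _ _ x (leq0n n); rewrite BB0 => hs.
  have hb : 0 < bb n 0 x.
    by rewrite /bb bin0 expr0 !mul1r subn0 exprn_gt0 // subr_gt0 (lt_le_trans hxy).
  rewrite !BB0 in d1 e hs *.
  nra.
have s := IH k.+1 hk.
have y0 : 0 < y by exact: le_lt_trans hxy.
have e0 := BB_ge0 n k.+1 x hx.
nra.
Qed.

End Binom.
Arguments bb {R} n j x.
Arguments BB {R} n k x.

Section Sort01.
Variable R : realType.

Lemma sorted01 (c0 c1 : nat) : sorted <=%R (nseq c0 (0:R) ++ nseq c1 1).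
Proof.
elim: c0 => [|c0 IH] /=.
  elim: c1 => [|[|c1] IH] //=.
  by move: IH => /= ->; rewrite lexx.
case: c0 IH => [|c0] /= IH.
  by case: c1 IH => [|c1] //= ->; rewrite ler01.
by rewrite IH lexx.
Qed.

Lemma sort01 (v : seq R) : all (fun x => (x == 0) || (x == 1)) v ->
  sort <=%R v = nseq (count (pred1 (0%R:R)) v) 0 ++ nseq (size v - count (pred1 (0%R:R)) v) 1.
Proof.
move=> h01.
apply: (sorted_eq le_trans le_anti); first by apply: sort_sorted; exact: le_total.
  exact: sorted01.
rewrite perm_sort.
have e1 : [seq x <- v | pred1 0 x] = nseq (count (pred1 (0%R:R)) v) 0.
  by rewrite -size_filter; apply/all_pred1P; exact: filter_all.
have e2 : [seq x <- v | predC (pred1 (0%R:R)) x] =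
    nseq (size v - count (pred1 (0%R:R)) v) 1.
  rewrite -(count_predC (pred1 (0%R:R)) v) addKn -size_filter; apply/all_pred1P.
  apply/allP => x; rewrite mem_filter => /andP[/= hx xv].
  by move/allP: h01 => /(_ x xv) /orP[/eqP x0|//]; rewrite x0 eqxx in hx.
by rewrite -e1 -e2 perm_sym perm_filterC.
Qed.

Lemma kth01 (v : seq R) k : all (fun x => (x == 0) || (x == 1)) v ->
  (0 < k <= size v)%N ->
  kth_smallest k v = (if (k <= count (pred1 (0%R:R)) v)%N then 0 else 1)%:E.
Proof.
move=> h01 hk; rewrite /kth_smallest hk sort01 //.
case/andP: hk => k0 kv.
rewrite nth_cat size_nseq.
have -> : (k.-1 < count (pred1 (0%R:R)) v)%N = (k <= count (pred1 (0%R:R)) v)%N.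
  by rewrite -(prednK k0).
case: ifP => hc; first by rewrite nth_nseq if_same.
rewrite nth_nseq ifT //.
have hc' : (count (pred1 (0%R:R)) v < k)%N by rewrite ltnNge hc.
have := count_size (pred1 (0%R:R)) v.
rewrite -(prednK k0) in hc' kv *; lia.
Qed.

End Sort01.

Lemma bigsetI_mem (I : eqType) (U : Type) (r : seq I) (P : pred I)
  (F : I -> set U) w :
  (\big[setI/setT]_(i <- r | P i) F i) w <-> (forall i, i \in r -> P i -> F i w).
Proof.
elim: r => [|a r IH]; first by rewrite big_nil; split.
rewrite big_cons; case: ifP => Pa.
  split.
    move=> [Fa /IH H] i; rewrite inE => /orP[/eqP ->//|ir]; exact: H.
  move=> H; split; first by apply: H; rewrite ?inE ?eqxx.
  by apply/IH => i ir; apply: H; rewrite inE ir orbT.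
split.
  move=> /IH H i; rewrite inE => /orP[/eqP ->|ir]; first by rewrite Pa.
  exact: H.
by move=> H; apply/IH => i ir; apply: H; rewrite inE ir orbT.
Qed.

Lemma bigsetU_mem (I : eqType) (U : Type) (r : seq I) (P : pred I)
  (F : I -> set U) w :
  (\big[setU/set0]_(i <- r | P i) F i) w <-> (exists i, [/\ i \in r, P i & F i w]).
Proof.
elim: r => [|a r IH]; first by rewrite big_nil; split => // -[i []].
rewrite big_cons; case: ifP => Pa.
  split.
    case=> [Fa|/IH [i [ir Pi Fi]]]; first by exists a; rewrite inE eqxx.
    by exists i; rewrite inE ir orbT.
  move=> [i []]; rewrite inE => /orP[/eqP ->|ir] Pi Fi; first by left.
  by right; apply/IH; exists i.
split.
  by move=> /IH [i [ir Pi Fi]]; exists i; rewrite inE ir orbT.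
move=> [i []]; rewrite inE => /orP[/eqP ->|ir] Pi Fi; first by rewrite Pa in Pi.
by apply/IH; exists i.
Qed.

Lemma measure_bigsetU_seq d (T : measurableType d) (R : realType)
  (mu : {measure set T -> \bar R}) (I : eqType) (r : seq I) (P : pred I)
  (F : I -> set T) :
  uniq r -> (forall i, measurable (F i)) ->
  (forall i j, i != j -> F i `&` F j = set0) ->
  mu (\big[setU/set0]_(i <- r | P i) F i) = (\sum_(i <- r | P i) mu (F i))%E.
Proof.
move=> + mF dF; elim: r => [|a r IH]; first by rewrite !big_nil measure0.
move=> /= /andP[ar ur]; rewrite !big_cons; case: ifP => Pa; last exact: IH.
rewrite measureU //; first by congr (_ + _)%E; exact: IH.
- by apply: bigsetU_measurable => i _; exact: mF.
apply/seteqP; split => // w [Fa /bigsetU_mem [i [ir _ Fi]]].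
have ai : a != i by apply/eqP => ai; rewrite ai ir in ar.
by rewrite -(dF _ _ ai).
Qed.

Lemma prod_unique d1 d2 (T1 : measurableType d1) (T2 : measurableType d2)
  (R : realType) (m1 m2 : {measure set (T1 * T2) -> \bar R}) :
  (forall A D, measurable A -> measurable D -> m1 (A `*` D) = m2 (A `*` D)) ->
  (m1 setT < +oo)%E -> forall C, measurable C -> m1 C = m2 C.
Proof.
move=> h hfin.
apply: (measure_unique [set A `*` B | A in measurable & B in measurable]
  (fun _ => setT)).
- exact: measurable_prod_measurableType.
- move=> _ _ [A mA [B mB <-]] [A' mA' [B' mB' <-]].
  exists (A `&` A'); first exact: measurableI.
  by exists (B `&` B'); [exact: measurableI|rewrite setXI].
- by move=> _; exists setT => //; exists setT => //; rewrite setXTT.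
- by apply/seteqP; split => // x _; exists 0%N.
- by move=> _ [A mA [B mB <-]]; exact: h.
- by move=> _.
Qed.

Lemma sum_sets (R : realType) (n k : nat) (x : R) :
  \sum_(S : {set 'I_n} | (k <= #|S|)%N) x ^+ #|S| * (1 - x) ^+ (n - #|S|) = BB n k x.
Proof.
have hS : forall S : {set 'I_n}, (#|S| < n.+1)%N.
  by move=> S; rewrite ltnS; apply: leq_trans (max_card _) _; rewrite card_ord.
rewrite (partition_big (fun S => Ordinal (hS S)) (fun j : 'I_n.+1 => (k <= j)%N)) //=.
rewrite /BB big_geq_mkord /=.
apply: eq_bigr => j hj.
rewrite (eq_bigl (fun S : {set 'I_n} => S \in [set S : {set 'I_n} | #|S| == j]%SET)); last first.
  move=> S; rewrite inE; apply/andP/idP.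
    by case=> _ /eqP <-.
  by move=> /eqP hSj; split; [rewrite hSj | apply/eqP/val_inj].
rewrite (eq_bigr (fun _ => x ^+ j * (1 - x) ^+ (n - j))); last first.
  by move=> S; rewrite inE => /eqP ->.
by rewrite sumr_const card_draws card_ord /bb -mulrA mulr_natl.
Qed.

Lemma cnt_card n (p : pred 'I_n) : count p (enum 'I_n) = #|[set i | p i]%SET|.
Proof.
rewrite cardsE cardE /enum_mem size_filter /=.
by rewrite (@eq_filter _ _ predT) // filter_predT.
Qed.

Lemma cov01 (R : realType) (TY : Type) (B : set TY) (n : nat) (alpha : R)
  (yv : 'I_n -> TY) (yt : TY) :
  (0 < `|conf_rank n alpha|%N <= n)%N ->
  (((\1_B yt : R)%:E <= conf_quantile alpha (fun i => (\1_B (yv i) : R)))%E <->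
  ~ (B yt /\ (`|conf_rank n alpha|%N <= #|[set i | yv i \notin B]%SET|)%N)).
Proof.
move=> hk; rewrite /conf_quantile kth01; last first.
- by rewrite size_map size_enum_ord.
- by apply/allP => x /mapP [i _ ->]; rewrite indicE; case: (_ \in _); rewrite ?eqxx ?orbT.
rewrite count_map cnt_card.
have -> : [set i | preim (fun i => (\1_B (yv i) : R)) (pred1 0) i]%SET =
    [set i | yv i \notin B]%SET.
  by apply/setP => i; rewrite !inE /= indicE; case: (_ \in _); rewrite /= ?oner_eq0 ?eqxx.
rewrite indicE; case: (boolP (yt \in B)) => h; case: ifP => hc /=.
- rewrite lee_fin ler10; split => // H; exfalso; apply: H; split => //.
  exact: set_mem.
- by rewrite lee_fin lexx; split => // _ [_ hk']; rewrite hk' in hc.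
- rewrite lee_fin lexx; split => // _ [hB _]; by move/negP: h; apply; exact: mem_set.
- rewrite lee_fin ler01; split => // _ [hB _]; by move/negP: h; apply; exact: mem_set.
Qed.

Lemma big_option_law (R : Type) (idx : R) (op : Monoid.law idx) (I : finType)
  (F : option I -> R) :
  \big[op/idx]_(k : option I) F k = op (F None) (\big[op/idx]_(i : I) F (Some i)).
Proof.
by rewrite ![index_enum _]unlock [@Finite.enum in LHS]unlock/= big_cons big_map.
Qed.

Lemma preimage_pairTX (T A B : Type) (f : T -> A) (g : T -> B) (C : set B) :
  (fun w => (f w, g w)) @^-1` (setT `*` C) = g @^-1` C.
Proof. by apply/seteqP; split => w /=; [case|]. Qed.

Section Indep.
Context (R : realType) (d dX dY : measure_display)
  (T : measurableType d) (P : probability T R)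
  (TX : measurableType dX) (TY : measurableType dY) (n : nat)
  (X : 'I_n -> T -> TX) (Y : 'I_n -> T -> TY)
  (Xt : T -> TX) (Yt : T -> TY) (U : 'I_n -> T -> R).
Hypotheses (hX : forall i, measurable_fun setT (X i))
  (hY : forall i, measurable_fun setT (Y i))
  (hXt : measurable_fun setT Xt) (hYt : measurable_fun setT Yt)
  (hU : forall i, measurable_fun setT (U i)).
Hypothesis hindep : mutually_independent P
     (fun k : option 'I_n + 'I_n => match k with
      | inl None => preimage_family (fun w => (Xt w, Yt w))
      | inl (Some i) => preimage_family (fun w => (X i w, Y i w))
      | inr i => preimage_family (U i)
      end).

Definition pr (A : set T) : R := fine (P A).

Lemma prE A : measurable A -> P A = (pr A)%:E.
Proof. by move=> mA; rewrite /pr fineK // fin_num_measure. Qed.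

Definition Z (i : 'I_n) (w : T) : TY * R := (Y i w, U i w).

Lemma mZ i : measurable_fun setT (Z i).
Proof. exact: measurable_fun_pair. Qed.

Lemma mpre d' (W : measurableType d') (f : T -> W) (C : set W) :
  measurable_fun setT f -> measurable C -> measurable (f @^-1` C).
Proof. by move=> mf mC; rewrite -[_ @^-1` _]setTI; exact: mf. Qed.

Lemma base (Ct : set TY) (A : 'I_n -> set TY) (D : 'I_n -> set R) :
  measurable Ct -> (forall i, measurable (A i)) -> (forall i, measurable (D i)) ->
  P (Yt @^-1` Ct `&` \big[setI/setT]_(i : 'I_n) (Y i @^-1` A i `&` U i @^-1` D i))
  = (pr (Yt @^-1` Ct) * \prod_(i : 'I_n) (pr (Y i @^-1` A i) * pr (U i @^-1` D i)))%:E.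
Proof.
move=> mCt mA mD.
pose Af (k : option 'I_n + 'I_n) : set T := match k with
  | inl None => (fun w => (Xt w, Yt w)) @^-1` (setT `*` Ct)
  | inl (Some i) => (fun w => (X i w, Y i w)) @^-1` (setT `*` A i)
  | inr i => U i @^-1` D i end.
have hAf : forall k, (match k with
      | inl None => preimage_family (fun w => (Xt w, Yt w))
      | inl (Some i) => preimage_family (fun w => (X i w, Y i w))
      | inr i => preimage_family (U i)
      end) (Af k).
  case=> [[i|]|i] /=.
  - by exists (setT `*` A i); split => //; exact: measurableX.
  - by exists (setT `*` Ct); split => //; exact: measurableX.
  - by exists (D i).
have := @hindep Af hAf [set: option 'I_n + 'I_n]%SET.
have -> : \big[setI/setT]_(k in [set: option 'I_n + 'I_n]%SET) Af k =
    Yt @^-1` Ct `&` \big[setI/setT]_(i : 'I_n) (Y i @^-1` A i `&` U i @^-1` D i).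
  apply/seteqP; split => w.
    move=> /bigsetI_mem H; split.
      by have := H (inl None); rewrite mem_index_enum finset.in_setT /= => /(_ erefl erefl) [].
    apply/bigsetI_mem => i _ _; split.
      by have := H (inl (Some i)); rewrite mem_index_enum finset.in_setT /= => /(_ erefl erefl) [].
    by have := H (inr i); rewrite mem_index_enum finset.in_setT /= => /(_ erefl erefl).
  move=> [hC /bigsetI_mem H]; apply/bigsetI_mem => -[[i|]|i] _ _ /=.
  - by have [] := H i (mem_index_enum _) erefl.
  - by [].
  - by have [] := H i (mem_index_enum _) erefl.
move=> ->; congr (_%:E).
rewrite (eq_bigl (fun _ => true)); last by move=> k; rewrite finset.in_setT.
rewrite big_sumType /= big_option_law /=.
rewrite /Af /= !preimage_pairTX -mulrA -big_split /=; congr (_ * _).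
by apply: eq_bigr => i _; rewrite preimage_pairTX.
Qed.


Lemma pr_setT : pr setT = 1.
Proof. by rewrite /pr probability_setT. Qed.

Lemma rectP i (A : set TY) (D : set R) : measurable A -> measurable D ->
  pr (Z i @^-1` (A `*` D)) = pr (Y i @^-1` A) * pr (U i @^-1` D).
Proof.
move=> mA mD.
have mA' : forall j, measurable (if j == i then A else setT).
  by move=> j; case: (j == i).
have mD' : forall j, measurable (if j == i then D else setT).
  by move=> j; case: (j == i).
have := @base setT _ _ measurableT mA' mD'.
have -> : Yt @^-1` setT `&` \big[setI/setT]_(j : 'I_n)
      (Y j @^-1` (if j == i then A else setT) `&`
       U j @^-1` (if j == i then D else setT)) = Z i @^-1` (A `*` D).
  apply/seteqP; split => w.
    move=> [_ /bigsetI_mem /(_ i (mem_index_enum _) erefl)].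
    by rewrite eqxx.
  move=> [hA hD]; split => //; apply/bigsetI_mem => j _ _.
  by case: ifP => [/eqP ->|_].
move=> h; rewrite {1}/pr h /= preimage_setT.
rewrite -/(pr setT) pr_setT mul1r (bigD1 i) //= eqxx big1 ?mulr1 //.
by move=> j /negPf ->; rewrite !preimage_setT -/(pr setT) pr_setT mulr1.
Qed.


Definition rect (C : set (TY * R)) :=
  exists AD : set TY * set R, [/\ measurable AD.1, measurable AD.2 & C = AD.1 `*` AD.2].

Definition Phi (m : nat) := forall (Ct : set TY) (E : 'I_n -> set (TY * R)),
  measurable Ct -> (forall i, measurable (E i)) ->
  (forall i : 'I_n, (m <= i)%N -> rect (E i)) ->
  P (Yt @^-1` Ct `&` \big[setI/setT]_(i : 'I_n) (Z i @^-1` E i)) =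
  (pr (Yt @^-1` Ct) * \prod_(i : 'I_n) pr (Z i @^-1` E i))%:E.

Lemma Phi0 : Phi 0.
Proof.
move=> Ct E mCt mE hr.
have [AD hAD] := choice (fun i => hr i (leq0n i)).
have -> : E = fun i => (AD i).1 `*` (AD i).2.
  by apply/funext => i; have [_ _ ->] := hAD i.
rewrite (@base Ct (fun i => (AD i).1) (fun i => (AD i).2)) //.
- congr (_ * _)%:E; apply: eq_bigr => i _.
  by have [mA mD _] := hAD i; rewrite rectP.
- by move=> i; have [] := hAD i.
- by move=> i; have [] := hAD i.
Qed.

Lemma mpreZ i C : measurable C -> measurable (Z i @^-1` C).
Proof. by move=> mC; apply: mpre => //; exact: mZ. Qed.

Lemma mpreYt C : measurable C -> measurable (Yt @^-1` C).
Proof. by move=> mC; apply: mpre. Qed.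

Lemma pr_ge0 A : 0 <= pr A.
Proof. by rewrite /pr fine_ge0. Qed.

Lemma PhiS m : Phi m -> Phi m.+1.
Proof.
move=> IH Ct E mCt mE hr.
case: (ltnP m n) => hmn; last first.
  apply: IH => // i hi; exfalso.
  by have := ltn_ord i; rewrite ltnNge (leq_trans hmn hi).
pose j := Ordinal hmn.
pose F := Yt @^-1` Ct `&` \big[setI/setT]_(i | i != j) Z i @^-1` E i.
have mF : measurable F.
  apply: measurableI; first exact: mpreYt.
  by apply: bigsetI_measurable => i _; exact: mpreZ.
pose c := pr (Yt @^-1` Ct) * \prod_(i | i != j) pr (Z i @^-1` E i).
have hc : 0 <= c by rewrite mulr_ge0 ?pr_ge0 // prodr_ge0 // => i _; exact: pr_ge0.
pose m1 : {measure set (TY * R) -> \bar R} :=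
  measure_function_pushforward__canonical__measure_function_Measure
    (mrestr P mF) (mZ j).
pose m2 : {measure set (TY * R) -> \bar R} :=
  mscale (NngNum hc)
  (measure_function_pushforward__canonical__measure_function_Measure P (mZ j)).
have split_set : forall G : 'I_n -> set (TY * R),
    Yt @^-1` Ct `&` \big[setI/setT]_(i : 'I_n) (Z i @^-1` G i) =
    Z j @^-1` G j `&` (Yt @^-1` Ct `&` \big[setI/setT]_(i | i != j) Z i @^-1` G i).
  move=> G; rewrite (bigD1 j) //=.
  by apply/seteqP; split => w [a1 [b1 c1]].
have split_prod : forall G : 'I_n -> set (TY * R),
    pr (Yt @^-1` Ct) * \prod_(i : 'I_n) pr (Z i @^-1` G i) =
    pr (Yt @^-1` Ct) * \prod_(i | i != j) pr (Z i @^-1` G i) * pr (Z j @^-1` G j).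
  by move=> G; rewrite (bigD1 j) //= -mulrA [pr (Z j @^-1` G j) * _]mulrC.
have key : forall C, measurable C -> m1 C = m2 C.
  apply: prod_unique.
    move=> A D mA mD.
    pose E' := fun i => if i == j then A `*` D else E i.
    have hE' : forall i, measurable (E' i).
      by move=> i; rewrite /E'; case: ifP => _ //; exact: measurableX.
    have hr' : forall i : 'I_n, (m <= i)%N -> rect (E' i).
      move=> i hi; rewrite /E'; case: ifP => [_|/negbT hij].
        by exists (A, D).
      apply: hr; rewrite ltn_neqAle hi andbT.
      by apply: contra hij => /eqP hh; apply/eqP/val_inj; rewrite /= hh.
    have := IH Ct E' mCt hE' hr'.
    rewrite split_set split_prod /E' eqxx.
    have eqb : forall G : 'I_n -> set T, \big[setI/setT]_(i | i != j) G i =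
       \big[setI/setT]_(i | i != j) G i by [].
    rewrite (eq_bigr (fun i => Z i @^-1` E i)); last by move=> i /negPf ->.
    rewrite (eq_bigr (fun i => pr (Z i @^-1` E i))); last by move=> i /negPf ->.
    move=> h; rewrite /m1 /m2 /= /mscale /pushforward /mrestr /=.
    rewrite -/F h /pushforward (prE _ (mpreZ j _ (measurableX mA mD))) -EFinM -/c.
    by [].
  rewrite /m1 /= /pushforward /mrestr.
  apply: (le_lt_trans (probability_le1 _ _)); last exact: ltry.
  by apply: measurableI => //; exact: mpreZ.
have := key (E j) (mE j).
rewrite /m1 /m2 /= /mscale /pushforward /mrestr /= => h.
rewrite split_set split_prod -/F h /pushforward (prE _ (mpreZ j _ (mE j))).
by rewrite -EFinM.
Qed.

Lemma PhiN m : Phi m.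
Proof. by elim: m => [|m IHm]; [exact: Phi0 | exact: PhiS]. Qed.

Lemma K (Ct : set TY) (E : 'I_n -> set (TY * R)) :
  measurable Ct -> (forall i, measurable (E i)) ->
  P (Yt @^-1` Ct `&` \big[setI/setT]_(i : 'I_n) (Z i @^-1` E i)) =
  (pr (Yt @^-1` Ct) * \prod_(i : 'I_n) pr (Z i @^-1` E i))%:E.
Proof.
move=> mCt mE; apply: (PhiN n) => // i hi.
by have := ltn_ord i; rewrite ltnNge hi.
Qed.


Hypothesis hid : forall i B, measurable B ->
     P ((fun w => (X i w, Y i w)) @^-1` B) = P ((fun w => (Xt w, Yt w)) @^-1` B).
Hypothesis hunif : forall i B, measurable B ->
     P (U i @^-1` B) = lebesgue_measure (B `&` [set x : R | 0 <= x <= 1]).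

Lemma prY i A : measurable A -> pr (Y i @^-1` A) = pr (Yt @^-1` A).
Proof.
move=> mA; rewrite /pr -(@preimage_pairTX _ _ _ (X i)) hid ?preimage_pairTX //.
exact: measurableX.
Qed.

Lemma prU i j D : measurable D -> pr (U i @^-1` D) = pr (U j @^-1` D).
Proof. by move=> mD; rewrite /pr !hunif. Qed.

Lemma lawZ i j C : measurable C -> pr (Z i @^-1` C) = pr (Z j @^-1` C).
Proof.
move=> mC.
pose m1 : {measure set (TY * R) -> \bar R} :=
  measure_function_pushforward__canonical__measure_function_Measure P (mZ i).
pose m2 : {measure set (TY * R) -> \bar R} :=
  measure_function_pushforward__canonical__measure_function_Measure P (mZ j).
suff : m1 C = m2 C by rewrite /m1 /m2 /= /pushforward /pr => ->.
apply: prod_unique => //.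
  move=> A D mA mD; rewrite /m1 /m2 /= /pushforward.
  have mAD := measurableX mA mD.
  rewrite (prE _ (mpreZ i _ mAD)) (prE _ (mpreZ j _ mAD)).
  by rewrite !rectP // !prY // (prU i j).
by rewrite /m1 /= /pushforward preimage_setT probability_setT ltry.
Qed.


Definition cnt (C : set (TY * R)) (w : T) : nat := #|[set i : 'I_n | Z i w \notin C]%SET|.

Definition W (C : set (TY * R)) (S : {set 'I_n}) : set T :=
  \big[setI/setT]_(i : 'I_n) (Z i @^-1` (if i \in S then ~` C else C)).

Lemma W_eq C S w : W C S w -> S = [set i : 'I_n | Z i w \notin C]%SET.
Proof.
move=> /bigsetI_mem H; apply/setP => i; rewrite inE.
have := H i (mem_index_enum _) erefl; rewrite /preimage /=.
case: ifP => iS h.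
  by apply/esym/negP => /set_mem.
by apply/esym/negPn/mem_set.
Qed.

Lemma W_self C w : W C [set i : 'I_n | Z i w \notin C]%SET w.
Proof.
apply/bigsetI_mem => i _ _; rewrite /preimage /= inE.
case: (boolP (Z i w \in C)) => h /=.
  exact: set_mem.
by move=> hC; move/negP: h; apply; exact: mem_set.
Qed.

Lemma mW C S : measurable C -> measurable (W C S).
Proof.
move=> mC; apply: bigsetI_measurable => i _; apply: mpreZ.
by case: (i \in S) => //; exact: measurableC.
Qed.

Lemma pr_setC A : measurable A -> pr (~` A) = 1 - pr A.
Proof. by move=> mA; rewrite /pr probability_setC // (prE _ mA). Qed.

Lemma NCset (C : set (TY * R)) (Ct : set TY) (k : nat) :
  Yt @^-1` Ct `&` [set w | (k <= cnt C w)%N] =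
    \big[setU/set0]_(S <- index_enum {set 'I_n} | (k <= #|S|)%N)
      (Yt @^-1` Ct `&` W C S).
Proof.
  apply/seteqP; split => w.
    move=> [hCt hk]; apply/bigsetU_mem.
    exists [set i : 'I_n | Z i w \notin C]%SET; split.
    - exact: mem_index_enum.
    - exact: hk.
    - by split => //; exact: W_self.
  move=> /bigsetU_mem [S [_ hk [hCt hW]]]; split => //=.
  by rewrite /cnt -(W_eq _ _ _ hW).
Qed.

Lemma mN (C : set (TY * R)) (Ct : set TY) (k : nat) :
  measurable C -> measurable Ct ->
  measurable (Yt @^-1` Ct `&` [set w | (k <= cnt C w)%N]).
Proof.
move=> mC mCt; rewrite NCset; apply: bigsetU_measurable => S _.
by apply: measurableI; [exact: mpreYt | exact: mW].
Qed.

Lemma NC (C : set (TY * R)) (Ct : set TY) (k : nat) (i0 : 'I_n) :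
  measurable C -> measurable Ct ->
  P (Yt @^-1` Ct `&` [set w | (k <= cnt C w)%N]) =
  (pr (Yt @^-1` Ct) * BB n k (1 - pr (Z i0 @^-1` C)))%:E.
Proof.
move=> mC mCt; rewrite NCset.
rewrite measure_bigsetU_seq //; first last.
- move=> S S' hSS'; apply/seteqP; split => // w [[_ h1] [_ h2]].
  by move: hSS'; rewrite (W_eq _ _ _ h1) (W_eq _ _ _ h2) eqxx.
- by move=> S; apply: measurableI; [exact: mpreYt | exact: mW].
- exact: index_enum_uniq.
transitivity (\sum_(S : {set 'I_n} | (k <= #|S|)%N) (pr (Yt @^-1` Ct) *
    ((1 - pr (Z i0 @^-1` C)) ^+ #|S| *
     (1 - (1 - pr (Z i0 @^-1` C))) ^+ (n - #|S|)))%:E)%E.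
  apply: eq_bigr => S _.
  have mE : forall i, measurable (if i \in S then ~` C else C).
    by move=> i; case: (i \in S) => //; exact: measurableC.
  transitivity ((pr (Yt @^-1` Ct) *
    \prod_(i : 'I_n) pr (Z i @^-1` (if i \in S then ~` C else C)))%:E).
    exact: (K Ct (fun i => if i \in S then ~` C else C) mCt mE).
  congr (_ * _)%:E.
  rewrite (bigID (fun i => i \in S)) /=; congr (_ * _).
    rewrite (eq_bigr (fun _ => 1 - pr (Z i0 @^-1` C))); last first.
      by move=> i ->; rewrite preimage_setC pr_setC ?(lawZ i i0) //; exact: mpreZ.
    by rewrite prodr_const.
  rewrite (eq_bigr (fun _ => 1 - (1 - pr (Z i0 @^-1` C)))); last first.
    by move=> i /negPf ->; rewrite (lawZ i i0) // subKr.
  rewrite prodr_const; congr (_ ^+ _).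
  have := cardC S; rewrite card_ord => h.
  have e : #|(fun i : 'I_n => i \notin S)| = #|[predC S]| by apply: eq_card.
  rewrite e; apply/eqP; rewrite -(eqn_add2l #|S|) h subnKC //.
  by apply: leq_trans (max_card _) _; rewrite card_ord.
by rewrite sumEFin -mulr_sumr sum_sets.
Qed.


Lemma pr_le1 A : measurable A -> pr A <= 1.
Proof. by move=> mA; have := probability_le1 P mA; rewrite (prE _ mA) lee_fin. Qed.

Variables (alpha : R) (g : TY -> R -> TY).
Hypotheses (halpha : 0 < alpha < 1) (hrank : conf_rank n alpha <= n%:Z)
  (hg : measurable_fun setT (fun p : TY * R => g p.1 p.2))
  (hnoise : exists i : 'I_n, exists B : set TY, measurable B /\
     P ((fun w => g (Y i w) (U i w)) @^-1` B) <> P (Y i @^-1` B)).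

Definition Cg (D : set TY) : set (TY * R) := (fun p : TY * R => g p.1 p.2) @^-1` D.

Lemma mCg D : measurable D -> measurable (Cg D).
Proof. by move=> mD; rewrite /Cg -[_ @^-1` _]setTI; exact: hg. Qed.

Lemma main_sec : exists s : TX -> TY -> R,
    measurable_fun setT (fun p : TX * TY => s p.1 p.2) /\
    (P [set w | conf_set s
          (conf_quantile alpha (fun i => s (X i w) (g (Y i w) (U i w)))) (Xt w) (Yt w)]
     < P [set w | conf_set s
          (conf_quantile alpha (fun i => s (X i w) (Y i w))) (Xt w) (Yt w)])%E.
Proof.
pose k := `|conf_rank n alpha|%N.
have hr0 : 0 < conf_rank n alpha.
  rewrite /conf_rank ceil_gt0 mulr_gt0 //.
  by rewrite subr_gt0; case/andP: halpha.
have hk : (0 < k <= n)%N.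
  apply/andP; split; first by rewrite absz_gt0 gt_eqF.
  by rewrite /k -lez_nat gez0_abs //; exact: ltW.
have [i0 [B [mB hneq]]] := hnoise.
have [B' [mB' hlt]] : exists B', measurable B' /\
    pr (Z i0 @^-1` Cg B') < pr (Yt @^-1` B').
  have hne : pr (Z i0 @^-1` Cg B) != pr (Y i0 @^-1` B).
    apply/eqP => heq; apply: hneq.
    have -> : (fun w => g (Y i0 w) (U i0 w)) @^-1` B = Z i0 @^-1` Cg B by [].
    by rewrite (prE _ (mpreZ _ _ (mCg _ mB))) (prE _ (mpre _ _ _ _ (hY i0) mB)) heq.
  rewrite (prY _ _ mB) in hne.
  case: (ltgtP (pr (Z i0 @^-1` Cg B)) (pr (Yt @^-1` B))) hne => // h _.
    by exists B.
  exists (~` B); split; first exact: measurableC.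
  rewrite (_ : Z i0 @^-1` Cg (~` B) = ~` (Z i0 @^-1` Cg B)) // (_ : Yt @^-1` (~` B) = ~` (Yt @^-1` B)) // !pr_setC; first by rewrite ltrD2l ltrN2.
  - exact: mpreYt.
  - exact: mpreZ _ _ (mCg _ mB).
pose s := fun (_ : TX) (y : TY) => (\1_B' y : R).
exists s; split.
  apply: (measurableT_comp (f := \1_B' : TY -> R) (g := snd)).
    exact: measurable_indic.
  exact: measurable_snd.
have covE : forall (yv : 'I_n -> T -> TY) (C : set (TY * R)),
    (forall i w, (yv i w \in B') = (Z i w \in C)) ->
    [set w | conf_set s (conf_quantile alpha (fun i => s (X i w) (yv i w))) (Xt w) (Yt w)]
    = ~` (Yt @^-1` B' `&` [set w | (k <= cnt C w)%N]).
  move=> yv C hyv.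
  have hc : forall w, [set i | yv i w \notin B']%SET = [set i | Z i w \notin C]%SET.
    by move=> w; apply/setP => i; rewrite !inE hyv.
  apply/seteqP; split => w /=.
    rewrite /conf_set /= => /(@cov01 _ _ B' _ _ (fun i => yv i w) (Yt w) hk).
    by rewrite /cnt hc.
  move=> H; rewrite /conf_set /=; apply/(@cov01 _ _ B' _ _ (fun i => yv i w) (Yt w) hk).
  by rewrite hc.
rewrite (covE (fun i w => g (Y i w) (U i w)) (Cg B')); last first.
  by move=> i w; apply/idP/idP => /set_mem h; apply: mem_set.
rewrite (covE Y (B' `*` setT)); last first.
  by move=> i w; apply/idP/idP => /set_mem h; apply: mem_set => //; case: h.
have mN1 := mN (Cg B') B' k (mCg _ mB') mB'.
have mN2 := mN (B' `*` setT) B' k (measurableX mB' measurableT) mB'.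
rewrite !probability_setC //.
rewrite (NC _ _ _ i0 (mCg _ mB') mB') (NC _ _ _ i0 (measurableX mB' measurableT) mB').
rewrite rectP // preimage_setT pr_setT mulr1 (prY _ _ mB').
have a0 : 0 < pr (Yt @^-1` B') by exact: le_lt_trans (pr_ge0 _) hlt.
rewrite -!EFinB lte_fin ltrD2l ltrN2 (ltr_pM2l a0).
apply: BB_strict => //.
- by rewrite subr_ge0 pr_le1 //; exact: mpreYt.
- by rewrite ltrD2l ltrN2.
- by rewrite lerBlDr lerDl pr_ge0.
Qed.

End Indep.

Theorem mainTheorem6
  (R : realType) (d dX dY : measure_display)
  (T : measurableType d) (P : probability T R)
  (TX : measurableType dX) (TY : measurableType dY)
  (n : nat) (alpha : R)
  (X : 'I_n -> T -> TX) (Y : 'I_n -> T -> TY)   (* calibration data *)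
  (Xt : T -> TX) (Yt : T -> TY)                 (* test point *)
  (U : 'I_n -> T -> R)                          (* corruption seeds *)
  (g : TY -> R -> TY)                           (* corruption function *)
  (* level *)
  (halpha : 0 < alpha < 1)
  (hrank : conf_rank n alpha <= n%:Z)
  (* measurability *)
  (hX : forall i, measurable_fun setT (X i))
  (hY : forall i, measurable_fun setT (Y i))
  (hXt : measurable_fun setT Xt) (hYt : measurable_fun setT Yt)
  (hU : forall i, measurable_fun setT (U i))
  (hg : measurable_fun setT (fun p : TY * R => g p.1 p.2))
  (* (X_1,Y_1),...,(X_n,Y_n),(X_test,Y_test) identically distributed *)
  (hid : forall i B, measurable B ->
     P ((fun w => (X i w, Y i w)) @^-1` B) = P ((fun w => (Xt w, Yt w)) @^-1` B))
  (* U_i ~ Unif[0,1] *)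
  (hunif : forall i B, measurable B ->
     P (U i @^-1` B) = lebesgue_measure (B `&` [set x : R | 0 <= x <= 1]))
  (* the data pairs and the seeds are mutually independent *)
  (hindep : mutually_independent P
     (fun k : option 'I_n + 'I_n => match k with
      | inl None => preimage_family (fun w => (Xt w, Yt w))
      | inl (Some i) => preimage_family (fun w => (X i w, Y i w))
      | inr i => preimage_family (U i)
      end))
  (* the noisy label tilde Y = g(Y,U) does not have the law of Y *)
  (hnoise : exists i : 'I_n, exists B : set TY, measurable B /\
     P ((fun w => g (Y i w) (U i w)) @^-1` B) <> P (Y i @^-1` B)) :
  exists s : TX -> TY -> R,
    measurable_fun setT (fun p : TX * TY => s p.1 p.2) /\
    (P [set w | conf_set s
          (conf_quantile alpha (fun i => s (X i w) (g (Y i w) (U i w)))) (Xt w) (Yt w)]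
     < P [set w | conf_set s
          (conf_quantile alpha (fun i => s (X i w) (Y i w))) (Xt w) (Yt w)])%E.
Proof.
by eapply main_sec; eassumption.
Qed.
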